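(* Let $T\subseteq\mathbb{R}^n$ be an action set. If $T'$ is a face of $T$, then $T'$ is an action set.
   Context: Single-commodity network pricing setting: $G=(\mathcal{V},\mathcal{A})$ directed graph, arc costs $c\ge0$, nonempty tolled arc set $\mathcal{A}_1\subsetneq\mathcal{A}$, $n=|\mathcal{A}_1|$, $N$ node–arc incidence matrix, single origin $o$ and destination $d$ connected by a toll-free path, $b_o=1$, $b_d=-1$, $b_i=0$ otherwise, $\mathcal{X}=\{x\in\mathbb{R}^{\mathcal{A}}: Nx=b,\ x\ge0\}$, $x_{\mathcal{A}_1}$ the restriction of $x$ to $\mathcal{A}_1$. Let $f(t)=\min\{c^\top x+t^\top x_{\mathcal{A}_1}: x\in\mathcal{X}\}$ for $t\in\mathbb{R}^n$, $t\ge0$, and $f(t)=-\infty$ otherwise. A set $T\subseteq\mathbb{R}^n$ is an action set if there is a face $F$ of the polyhedron $\operatorname{epi}(-f)\subseteq\mathbb{R}^n\times\mathbb{R}$ such that (i) the direction $(0,1)$ does not belong to the linear subspace parallel to $\operatorname{aff}(F)$ ($F$ is non-vertical), and (ii) $T=\{t\in\mathbb{R}^n : (t,z)\in F\text{ for some } z\}$. *)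

(* Defs.v *)
From HB Require Import structures.
From mathcomp Require Import all_boot all_order all_algebra.
From mathcomp Require Import all_classical all_reals ereal.
Set Implicit Arguments. Unset Strict Implicit. Unset Printing Implicit Defensive.
Import Order.TTheory GRing.Theory Num.Theory.
Local Open Scope classical_set_scope.
Local Open Scope ring_scope.

Section Defs.
Variable R : realType.

Definition dotv (m : nat) (u v : 'rV[R]_m) : R := \sum_(i < m) u ord0 i * v ord0 i.

(* F is a face of the set P : F = P ∩ {x | a.x = beta} for a valid inequality
   a.x <= beta of P (standard convention; includes P itself and possibly set0) *)
Definition is_face (m : nat) (P F : set 'rV[R]_m) : Prop :=
  exists (a : 'rV[R]_m) (beta : R),
    (forall x, P x -> dotv x a <= beta) /\
    F = P `&` [set x | dotv x a = beta].

Definition aff (m : nat) (F : set 'rV[R]_m) : set 'rV[R]_m :=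
  [set x | exists s : seq (R * 'rV[R]_m),
      (forall p, p \in s -> F p.2) /\
      \sum_(p <- s) p.1 = 1 /\
      x = \sum_(p <- s) p.1 *: p.2].

Definition lin_parallel (m : nat) (F : set 'rV[R]_m) : set 'rV[R]_m :=
  [set u - v | u in aff F & v in aff F].

Definition pairv (n : nat) (t : 'rV[R]_n) (z : R) : 'rV[R]_(n + 1) :=
  row_mx t (\row_(j < 1) z).

Section Network.
Variables (V A : finType) (src dst : A -> V) (A1 : {set A}) (c : A -> R) (o d : V).

Local Notation n := #|A1|.

(* the i-th tolled arc (fixed enumeration of A1, identifying R^{A1} with R^n) *)
Definition tolled (i : 'I_n) : A := enum_val i.

Definition bvec (v : V) : R := if v == o then 1 else if v == d then -1 else 0.

(* X = { x | N x = b, x >= 0 }, with N the node-arc incidence matrix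
   (+1 at the tail of an arc, -1 at its head) *)
Definition flows : set (A -> R) :=
  [set x | (forall a, 0 <= x a) /\
     forall v, \sum_(a | src a == v) x a - \sum_(a | dst a == v) x a = bvec v].

Definition cost (t : 'rV[R]_n) (x : A -> R) : R :=
  \sum_a c a * x a + \sum_(i < n) t ord0 i * x (tolled i).

(* f(t) = min {c^T x + t^T x_A1 : x in X} for t >= 0, -oo otherwise
   (the minimum is written as an infimum; it is attained) *)
Definition fval (t : 'rV[R]_n) : \bar R :=
  if [forall i, 0 <= t ord0 i] then ereal_inf [set (cost t x)%:E | x in flows]
  else -oo%E.

Definition epi_negf : set 'rV[R]_(n + 1) :=
  [set y | exists t z, y = pairv t z /\ (- fval t <= z%:E)%E].

Definition non_vertical (F : set 'rV[R]_(n + 1)) : Prop :=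
  ~ lin_parallel F (pairv 0 1).

Definition action_set (T : set 'rV[R]_n) : Prop :=
  exists F, is_face epi_negf F /\ non_vertical F /\
    T = [set t | exists z, F (pairv t z)].

Definition toll_free_path : Prop :=
  exists (a0 : A) (p : seq A),
    src a0 = o /\ dst (last a0 p) = d /\
    path (fun a b => dst a == src b) a0 p /\
    all (fun a => a \notin A1) (a0 :: p).

End Network.
End Defs.

(* Main.v *)
Require Import Defs.
From HB Require Import structures.
From mathcomp Require Import all_boot all_order all_algebra.
From mathcomp Require Import all_classical all_reals ereal.
From mathcomp Require Import lra.
Set Implicit Arguments. Unset Strict Implicit. Unset Printing Implicit Defensive.
Import Order.TTheory GRing.Theory Num.Theory.
Local Open Scope classical_set_scope.
Local Open Scope ring_scope.

Section Poly.
Variable R : realType.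
Variable m : nat.
Implicit Types (x y u v : 'rV[R]_m).

Lemma dotvD x y u : dotv (x + y) u = dotv x u + dotv y u.
Proof. rewrite /dotv -big_split; apply: eq_bigr => i _; by rewrite mxE mulrDl. Qed.
Lemma dotvZ k x u : dotv (k *: x) u = k * dotv x u.
Proof. rewrite /dotv mulr_sumr; apply: eq_bigr => i _; by rewrite mxE mulrA. Qed.
Lemma dotv0 u : dotv 0 u = 0.
Proof. rewrite /dotv big1 // => i _; by rewrite mxE mul0r. Qed.
Lemma dotvx0 u : dotv u 0 = 0.
Proof. rewrite /dotv big1 // => i _; by rewrite mxE mulr0. Qed.
Lemma dotvB x y u : dotv (x - y) u = dotv x u - dotv y u.
Proof. by rewrite dotvD -scaleN1r dotvZ mulN1r. Qed.
Lemma dotv_sum (K : finType) (p : K -> 'rV[R]_m) u :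
  dotv (\sum_k p k) u = \sum_k dotv (p k) u.
Proof. exact: (big_morph (fun x => dotv x u) (fun x y => dotvD x y u) (dotv0 u)). Qed.

Definition poly (K : finType) (u : K -> 'rV[R]_m) (r : K -> R) (Q : K -> Prop)
  : set 'rV[R]_m :=
  [set y | (forall k, dotv y (u k) <= r k) /\ (forall k, Q k -> dotv y (u k) = r k)].

Lemma pos_lb (K : finType) (g : K -> R) : (forall k, 0 < g k) ->
  exists e, 0 < e /\ forall k, e <= g k.
Proof.
move=> Hg; set S := \sum_k (g k)^-1.
have S0 : 0 <= S by apply: sumr_ge0 => k _; rewrite invr_ge0 ltW.
exists (1 / (1 + S)); split; first by rewrite divr_gt0 // ltr_wpDr.
move=> k; rewrite ler_pdivrMr ?ltr_wpDr //.
have Hk : (g k)^-1 <= S.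
  rewrite /S (bigD1 k) //= lerDl; apply: sumr_ge0 => j _; by rewrite invr_ge0 ltW.
have gk := Hg k.
have : g k * (g k)^-1 = 1 by rewrite mulfV // gt_eqF.
move=> H1; rewrite mulrDr mulr1.
have : g k * (g k)^-1 <= g k * S by rewrite ler_wpM2l // ltW.
rewrite H1 => H2; have : 0 <= g k by exact: ltW. move=> H3. lra.
Qed.

Section Avg.
Variables (K : finType) (y1 : 'rV[R]_m) (p : K -> 'rV[R]_m).
Let N : R := (#|K|.+1)%:R.
Definition avg := N^-1 *: (y1 + \sum_k p k).
Lemma avgE v : dotv avg v = N^-1 * (dotv y1 v + \sum_k dotv (p k) v).
Proof. by rewrite /avg dotvZ dotvD dotv_sum. Qed.
Lemma N_gt0 : 0 < N. Proof. by rewrite /N ltr0Sn. Qed.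
Lemma sum_cst (c : R) : c + \sum_(k : K) c = N * c.
Proof. by rewrite sumr_const /N mulr_natl mulrS. Qed.
Lemma avg_le v c : dotv y1 v <= c -> (forall k, dotv (p k) v <= c) -> dotv avg v <= c.
Proof.
move=> H1 H2; rewrite avgE.
have : dotv y1 v + \sum_k dotv (p k) v <= N * c.
  by rewrite -sum_cst lerD // ler_sum.
move=> H; rewrite -[c](mulKf (lt0r_neq0 N_gt0)) ler_pM2l // invr_gt0 N_gt0 //=.
Qed.
Lemma avg_eq v c : dotv y1 v = c -> (forall k, dotv (p k) v = c) -> dotv avg v = c.
Proof.
move=> H1 H2; rewrite avgE.
have -> : dotv y1 v + \sum_k dotv (p k) v = N * c.
  by rewrite -sum_cst H1; congr (_ + _); apply: eq_bigr.
by rewrite mulKf // lt0r_neq0 // N_gt0.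
Qed.
Lemma avg_lt v c k0 : dotv y1 v <= c -> (forall k, dotv (p k) v <= c) ->
  dotv (p k0) v < c -> dotv avg v < c.
Proof.
move=> H1 H2 H3; rewrite avgE.
have : dotv y1 v + \sum_k dotv (p k) v < N * c.
  rewrite -sum_cst ler_ltD // (bigD1 k0) //= [X in _ < X](bigD1 k0) //=.
  by rewrite ltr_leD // ler_sum.
move=> H; rewrite -[c](mulKf (lt0r_neq0 N_gt0)) ltr_pM2l // invr_gt0 N_gt0 //=.
Qed.
End Avg.

Lemma face_poly (K : finType) (u : K -> 'rV[R]_m) r Q a beta (F : set 'rV[R]_m) :
  (forall y, poly u r Q y -> dotv y a <= beta) ->
  F = poly u r Q `&` [set y | dotv y a = beta] ->
  (exists y1, F y1) ->
  F = poly u r (fun k => forall y, F y -> dotv y (u k) = r k).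
Proof.
move=> Hval HF [y1 Fy1].
have FQ : forall y, F y -> poly u r Q y /\ dotv y a = beta by rewrite HF.
set Q' := fun k => forall y, F y -> dotv y (u k) = r k.
apply/seteqP; split.
  move=> y Fy; have [[Hle _] _] := FQ y Fy; split => // k Hk; exact: Hk y Fy.
move=> y [Hle Heq].
have QQ : forall k, Q k -> Q' k.
  by move=> k Qk z Fz; have [[_ H] _] := FQ z Fz; exact: H.
have Hch : forall k, exists q, F q /\ (~ Q' k -> dotv q (u k) < r k).
  move=> k; case: (pselect (Q' k)) => HQ.
    by exists y1; split.
  move: HQ; rewrite /Q' => /existsPNP [q Fq Hne]; exists q; split => // _.
  have [[Hl _] _] := FQ q Fq; rewrite lt_neqAle Hl andbT; apply/eqP; exact: Hne.
have [p Hp] := choice Hch.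
set y0 := avg y1 p.
have Fy0 : F y0.
  rewrite HF; split; [split|].
  - move=> k; apply: avg_le => [|j]; [exact: (FQ _ Fy1).1.1 k | exact: (FQ _ (Hp j).1).1.1 k].
  - move=> k Qk; apply: avg_eq => [|j]; [exact: (FQ _ Fy1).1.2 k Qk | exact: (FQ _ (Hp j).1).1.2 k Qk].
  - apply: avg_eq; [exact: (FQ _ Fy1).2 | move=> j; exact: (FQ _ (Hp j).1).2].
have Hd : forall k, ~ Q' k -> dotv y0 (u k) < r k.
  move=> k nQ; apply: (@avg_lt _ _ _ _ _ k).
  - exact: (FQ _ Fy1).1.1 k.
  - move=> j; exact: (FQ _ (Hp j).1).1.1 k.
  - exact: (Hp k).2 nQ.
pose g := fun k => if `[< Q' k >] then 1 else
  (r k - dotv y0 (u k)) / (`|dotv y0 (u k) - dotv y (u k)| + (r k - dotv y0 (u k))).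
have gpos : forall k, 0 < g k.
  move=> k; rewrite /g; case: asboolP => // nQ; have h := Hd k nQ.
  have h2 := normr_ge0 (dotv y0 (u k) - dotv y (u k)).
  apply: divr_gt0; lra.
have [e [e0 He]] := pos_lb gpos.
pose z := (1 + e) *: y0 - e *: y.
have zE : forall v, dotv z v = (1 + e) * dotv y0 v - e * dotv y v.
  by move=> v; rewrite dotvB !dotvZ.
have Pz : poly u r Q z.
  split.
  - move=> k; rewrite zE; case: (pselect (Q' k)) => HQ.
      rewrite (HQ _ Fy0) (Heq k HQ); lra.
    have := He k; rewrite /g; case: asboolP => // _ Hek.
    have h := Hd k HQ.
    have h2 := ler_norm (dotv y0 (u k) - dotv y (u k)).
    have h3 := normr_ge0 (dotv y0 (u k) - dotv y (u k)).
    rewrite ler_pdivlMr in Hek; last lra.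
    nra.
  - move=> k Qk; rewrite zE (QQ k Qk _ Fy0) (Heq k (QQ k Qk)); lra.
have Hz := Hval z Pz; rewrite zE (FQ _ Fy0).2 in Hz.
have Hy : poly u r Q y by split => // k Qk; exact: Heq k (QQ k Qk).
have Hy' := Hval y Hy.
rewrite HF; split => //=.
nra.
Qed.
End Poly.

From mathcomp Require Import ring.

Section Flows.
Variable R : realType.
Variables (V A : finType) (src dst : A -> V) (A1 : {set A}) (c : A -> R) (o d : V).
Hypothesis Hc : forall a, 0 <= c a.
Local Notation n := #|A1|.
Local Notation fl := (flows src dst o d).

Definition supp (x : A -> R) : {set A} := [set a | x a != 0].
Definition ext (x : A -> R) := forall y, fl y -> (forall a, x a = 0 -> y a = 0) -> y = x.

Lemma combo_flow x y (mu : R) : fl x -> fl y ->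
  (forall a, 0 <= x a + mu * (y a - x a)) -> fl (fun a => x a + mu * (y a - x a)).
Proof.
move=> [_ Hx] [_ Hy] H0; split => // v.
have E : forall P : pred A, \sum_(a | P a) (x a + mu * (y a - x a)) =
   \sum_(a | P a) x a + mu * (\sum_(a | P a) y a - \sum_(a | P a) x a).
  by move=> P; rewrite big_split /=; congr (_ + _); rewrite -sumrB mulr_sumr.
rewrite !E.
rewrite (_ : forall a b c e : R, (a + mu*(b-a)) - (c + mu*(e - c)) = (a - c) + mu*((b - e) - (a - c))); last by move=> *; ring.
by rewrite Hx Hy subrr mulr0 addr0.
Qed.

Lemma cost_combo (t : 'rV[R]_n) x y (mu : R) :
  cost c t (fun a => x a + mu * (y a - x a)) = cost c t x + mu * (cost c t y - cost c t x).
Proof.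
rewrite /cost.
have E1 : \sum_a c a * (x a + mu * (y a - x a)) = \sum_a c a * x a + mu * (\sum_a c a * y a - \sum_a c a * x a).
  rewrite -sumrB mulr_sumr -big_split; apply: eq_bigr => a _ /=; ring.
have E2 : \sum_(i < n) t ord0 i * (x (tolled i) + mu * (y (tolled i) - x (tolled i))) =
  \sum_(i < n) t ord0 i * x (tolled i) + mu * (\sum_(i < n) t ord0 i * y (tolled i) - \sum_(i < n) t ord0 i * x (tolled i)).
  rewrite -sumrB mulr_sumr -big_split; apply: eq_bigr => a _ /=; ring.
rewrite E1 E2; ring.
Qed.

Lemma cost_mono (t : 'rV[R]_n) x y : (forall i, 0 <= t ord0 i) -> (forall a, x a <= y a) ->
  cost c t x <= cost c t y.
Proof.
move=> Ht Hxy; rewrite /cost lerD // ler_sum // => i _; exact: ler_wpM2l.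
Qed.

Lemma reduce_step (t : 'rV[R]_n) x : (forall i, 0 <= t ord0 i) -> fl x -> ~ ext x ->
  exists x', fl x' /\ (#|supp x'| < #|supp x|)%N /\ cost c t x' <= cost c t x.
Proof.
move=> Ht fx; rewrite /ext => /existsPNP [y fy /not_implyP [Hsupp Hne]].
have [a2 Ha2] : exists a, y a != x a.
  apply: contrapT => H; apply: Hne; apply: funext => a; apply: contrapT => h; apply: H; exists a; exact/eqP.
pose D := cost c t y - cost c t x.
have [s [HsD [a1 Ha1]]] : exists s : R, s * D <= 0 /\ exists a, s * (y a - x a) < 0.
  case: (pselect (exists a, 0 < y a - x a)) => [[ap hp]|hnp].
    case: (lerP 0 D) => hD.
      by exists (-1); split; [rewrite mulN1r oppr_le0 | exists ap; rewrite mulN1r oppr_lt0].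
    case: (pselect (exists a, y a - x a < 0)) => [[an hn]|hnn].
      by exists 1; split; [rewrite mul1r ltW | exists an; rewrite mul1r].
    exfalso; have : cost c t x <= cost c t y.
      apply: cost_mono => // a; rewrite -subr_ge0 leNgt; apply/negP => h; apply: hnn; by exists a.
    rewrite /D in hD; lra.
  have hle : forall a, y a <= x a.
    move=> a; rewrite -subr_le0 leNgt; apply/negP => h; apply: hnp; by exists a.
  exists 1; split.
    rewrite mul1r /D subr_le0; exact: cost_mono.
  exists a2; rewrite mul1r subr_lt0 lt_neqAle Ha2 hle //.
pose dd := fun a => s * (y a - x a).
have Hdd : forall a, dd a != 0 -> x a != 0.
  move=> a; apply: contraNN => /eqP h; by rewrite /dd (Hsupp a h) h subrr mulr0.
have Px := fx.1.
case: (@arg_minP _ _ A a1 (fun a => dd a < 0) (fun a => x a / - dd a) Ha1) => a0 Ha0 Hmin.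
pose lam := x a0 / - dd a0.
have lam0 : 0 <= lam by rewrite /lam divr_ge0 // oppr_ge0 ltW.
pose x' := fun a => x a + (s * lam) * (y a - x a).
have x'E : forall b, x' b = x b + lam * dd b by move=> b; rewrite /x' /dd; ring.
have fx' : fl x'.
  apply: combo_flow => // a; rewrite -/(x' a) x'E.
  case: (ltP (dd a) 0) => h.
    have := Hmin a h; rewrite -/lam ler_pdivlMr ?oppr_gt0 // => h'.
    rewrite mulrN in h'; lra.
  by rewrite addr_ge0 // mulr_ge0.
exists x'; split => //; split.
  apply: proper_card; apply/properP; split.
    apply/fintype.subsetP => a; rewrite !inE; apply: contraNN => /eqP h.
    by rewrite /x' h (Hsupp a h) subrr mulr0 addr0.
  exists a0; rewrite !inE.
    by apply: Hdd; rewrite lt_eqF.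
  rewrite x'E /lam negbK; apply/eqP; field. by rewrite lt_eqF.
rewrite (cost_combo t x y (s * lam)) -/D.
have -> : s * lam * D = lam * (s * D) by ring.
rewrite gerDl; exact: mulr_ge0_le0.
Qed.

Lemma reduce (t : 'rV[R]_n) : (forall i, 0 <= t ord0 i) -> forall x, fl x ->
  exists x', fl x' /\ ext x' /\ cost c t x' <= cost c t x.
Proof.
move=> Ht.
suff H : forall k x, (#|supp x| <= k)%N -> fl x -> exists x', fl x' /\ ext x' /\ cost c t x' <= cost c t x.
  by move=> x fx; exact: H _ x (leqnn _) fx.
elim=> [|k IH] x Hk fx; case: (pselect (ext x)) => He.
- by exists x.
- have [x' [_ [Hlt _]]] := reduce_step Ht fx He; move: Hlt; rewrite ltnNge.
  by rewrite (leq_trans Hk) // leq0n.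
- by exists x.
- have [x' [fx' [Hlt Hc']]] := reduce_step Ht fx He.
  have [x'' [f'' [e'' c'']]] := IH x' (leq_trans (leq_trans Hlt Hk) (leqnn _) : (#|supp x'| < k.+1)%N) fx'.
  by exists x''; split => //; split => //; exact: le_trans Hc'.
Qed.
End Flows.

Section Pair.
Variable R : realType.
Variable n : nat.

Lemma dotv_pair (t a : 'rV[R]_n) (z b : R) :
  dotv (pairv t z) (pairv a b) = dotv t a + z * b.
Proof.
rewrite /dotv big_split_ord /=; congr (_ + _).
  by apply: eq_bigr => i _; rewrite /pairv !row_mxEl.
by rewrite big_ord1 /pairv !row_mxEr !mxE.
Qed.

Lemma pairv_surj (y : 'rV[R]_(n + 1)) : exists t z, y = pairv t z.
Proof.
exists (lsubmx y), (rsubmx y ord0 ord0).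
rewrite /pairv -{1}(hsubmxK y); congr row_mx; apply/rowP => j.
by rewrite mxE (ord1 j).
Qed.

Lemma dotvDr m (y u v : 'rV[R]_m) : dotv y (u + v) = dotv y u + dotv y v.
Proof. rewrite /dotv -big_split; apply: eq_bigr => i _; by rewrite mxE mulrDr. Qed.

Lemma dotv_sumr m (K : finType) (P : pred K) (y : 'rV[R]_m) (u : K -> 'rV[R]_m) :
  dotv y (\sum_(k | P k) u k) = \sum_(k | P k) dotv y (u k).
Proof. exact: (big_morph (fun x => dotv y x) (fun a b => dotvDr y a b) (dotvx0 y)). Qed.

Lemma aff_mono m (F G : set 'rV[R]_m) : F `<=` G -> aff F `<=` aff G.
Proof. move=> H x [s [Hs rest]]; exists s; split => // p /Hs; exact: H. Qed.

Lemma aff0 m : aff (set0 : set 'rV[R]_m) = set0.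
Proof.
apply/seteqP; split => // x [[|p s] [Hin [Hsum _]]].
  by move: Hsum; rewrite big_nil => /eqP; rewrite eq_sym oner_eq0.
by have := Hin p (mem_head _ _).
Qed.
End Pair.

Section Main.
Variable R : realType.
Variables (V A : finType) (src dst : A -> V) (A1 : {set A}) (c : A -> R) (o d : V).
Hypothesis Hc : forall a, 0 <= c a.
Local Notation n := #|A1|.
Local Notation fl := (flows src dst o d).

Lemma exists_xS : exists xS : {set A} -> A -> R, forall S,
  (exists x : A -> R, fl x /\ ext src dst o d x /\ supp x = S) ->
  fl (xS S) /\ ext src dst o d (xS S) /\ supp (xS S) = S.
Proof.
have H : forall S : {set A}, exists y : A -> R, (exists x : A -> R, fl x /\ ext src dst o d x /\ supp x = S) ->
  fl y /\ ext src dst o d y /\ supp y = S.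
  move=> S; case: (pselect (exists x : A -> R, fl x /\ ext src dst o d x /\ supp x = S)) => [[x Hx]|hn].
    by exists x.
  by exists (fun _ => 0).
by have [f Hf] := choice H; exists f.
Qed.

Definition Kt := ('I_n + {set A})%type.
Definition uK (xS : {set A} -> A -> R) (k : Kt) : 'rV[R]_(n + 1) :=
  match k with
  | inl i => pairv (\row_j (if j == i then -1 else 0)) 0
  | inr S0 => if `[< fl (xS S0) >] then pairv (\row_j (- xS S0 (tolled j))) (-1) else 0
  end.
Definition rK (xS : {set A} -> A -> R) (k : Kt) : R :=
  match k with
  | inl i => 0
  | inr S0 => if `[< fl (xS S0) >] then \sum_a c a * xS S0 a else 0
  end.

Lemma dot_inl (t : 'rV[R]_n) z i : dotv (pairv t z) (uK (fun _ _ => 0) (inl i)) = - t ord0 i.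
Proof.
rewrite /= dotv_pair mulr0 addr0 /dotv (bigD1 i) //= big1 => [|j /negbTE hj]; rewrite mxE.
  by rewrite eqxx mulrN1 addr0.
by rewrite hj mulr0.
Qed.

Lemma dot_inr (t : 'rV[R]_n) z (x : A -> R) :
  dotv (pairv t z) (pairv (\row_j (- x (tolled j))) (-1)) <= \sum_a c a * x a <->
  - z <= cost c t x.
Proof.
rewrite dotv_pair /cost /dotv.
have -> : \sum_(i < n) t ord0 i * (\row_j (- x (tolled j))) ord0 i = - \sum_(i < n) t ord0 i * x (tolled i).
  by rewrite -sumrN; apply: eq_bigr => i _; rewrite mxE mulrN.
split => H; lra.
Qed.

Lemma epi_poly xS : (forall S,
  (exists x : A -> R, fl x /\ ext src dst o d x /\ supp x = S) ->
  fl (xS S) /\ ext src dst o d (xS S) /\ supp (xS S) = S) ->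
  epi_negf src dst c o d = poly (uK xS) (rK xS) (fun _ => False).
Proof.
move=> HxS; apply/seteqP; split.
  move=> y [t [z [-> H]]].
  have Ht : forall i, 0 <= t ord0 i.
    move: H; rewrite /fval; case: ifP => [/forallP Ht _ //|_].
    by rewrite /= leye_eq.
  have Hf : [forall i, 0 <= t ord0 i] by apply/forallP.
  move: H; rewrite /fval Hf leeNl => H.
  have Hx : forall x, fl x -> - z <= cost c t x.
    move=> x fx; rewrite -lee_fin; apply: le_trans H _.
    by apply: ereal_inf_lbound; exists x.
  split => // -[i|S] /=.
    have := dot_inl t z i; rewrite /= => ->; rewrite oppr_le0; exact: Ht.
  case: asboolP => fS.
    by apply/dot_inr; apply: Hx.
  by rewrite dotvx0.
move=> y [Hle _]; have [t [z Ey]] := pairv_surj y; rewrite Ey in Hle.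
exists t, z; split => //.
have Ht : forall i, 0 <= t ord0 i.
  move=> i; have := Hle (inl i); have := dot_inl t z i; rewrite /= => ->.
  by rewrite oppr_le0.
have Hf : [forall i, 0 <= t ord0 i] by apply/forallP.
rewrite /fval Hf leeNl; apply: le_ereal_inf_tmp => _ [x fx <-].
rewrite lee_fin.
have [x' [fx' [ex' cx']]] := reduce Hc Ht fx.
have [fS [eS sS]] := HxS (supp x') (ex_intro _ x' (conj fx' (conj ex' erefl))).
have E : xS (supp x') = x'.
  apply: ex' => // a h; apply/eqP; move: (sS) => /setP /(_ a); rewrite !inE h eqxx /=.
  by move/negbT; rewrite negbK.
apply: le_trans cx'; rewrite -E.
have := Hle (inr (supp x')); rewrite /=; case: asboolP => // _.
by move/dot_inr.
Qed.
End Main.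

Unset Implicit Arguments.

Theorem lemma3 (R : realType) (V A : finType) (src dst : A -> V)
  (A1 : {set A}) (c : A -> R) (o d : V)
  (Hsimple : injective (fun a => (src a, dst a)))
  (HA1ne : A1 != finset.set0 :> {set A}) (HA1prop : A1 != finset.setT :> {set A})
  (Hc : forall a, 0 <= c a)
  (Hod : o != d)
  (Hpath : toll_free_path src dst A1 o d)
  (T T' : set 'rV[R]_#|A1|) :
  action_set src dst c o d T -> is_face T T' -> action_set src dst c o d T'.
Proof.
move=> [F [[a [beta [Hval HF]]] [Hnv HT]]] [a' [beta' [Hval' HT']]].
case: (pselect (exists t, T' t)) => [[t1 T't1]|hne]; last first.
  exists set0; split; [|split].
  - exists 0, 1; split.
      by move=> x _; rewrite dotvx0 ler01.
    apply/seteqP; split => y //= [_]; rewrite dotvx0 => /eqP; by rewrite eq_sym oner_eq0.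
  - by move=> [p]; rewrite aff0.
  - apply/seteqP; split => t /=; [move=> h; exfalso; apply: hne; by exists t | by move=> [z]].
have [Tt1 Ht1] : T t1 /\ dotv t1 a' = beta' by rewrite HT' in T't1.
have [z1 Fz1] : exists z, F (pairv t1 z) by rewrite HT in Tt1.
have [xS HxS] := exists_xS R src dst o d.
have Hepi := epi_poly A1 Hc HxS.
rewrite Hepi in Hval HF.
have HF1 := face_poly Hval HF (ex_intro _ _ Fz1).
set Q1 := (fun k => _) in HF1.
pose F' := F `&` [set y | dotv y (pairv a' 0) = beta'].
have Hval1 : forall y, poly (@uK R V A src dst A1 o d xS) (@rK R V A src dst A1 c o d xS) Q1 y -> dotv y (pairv a' 0) <= beta'.
  move=> y; rewrite -HF1 => Fy; have [t [z Ey]] := pairv_surj y; subst y.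
  rewrite dotv_pair mulr0 addr0; apply: Hval'; rewrite HT; by exists z.
have HF' : F' = poly (@uK R V A src dst A1 o d xS) (@rK R V A src dst A1 c o d xS) Q1 `&` [set y | dotv y (pairv a' 0) = beta'].
  by rewrite /F' {1}HF1.
have F'ne : exists y, F' y.
  by exists (pairv t1 z1); split => //=; rewrite dotv_pair mulr0 addr0.
have HF2 := face_poly Hval1 HF' F'ne.
set Q2 := (fun k => _) in HF2.
exists F'; split; [|split].
- exists (\sum_(k | `[< Q2 k >]) @uK R V A src dst A1 o d xS k), (\sum_(k | `[< Q2 k >]) @rK R V A src dst A1 c o d xS k).
  rewrite Hepi; split.
    move=> y [Hle _]; rewrite dotv_sumr; exact: ler_sum.
  rewrite HF2; apply/seteqP; split => y.
    move=> [Hle Heq]; split; first by split.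
    rewrite /= dotv_sumr; apply: eq_bigr => k /asboolP; exact: Heq.
  move=> [[Hle _] /= Hs]; split => // k Qk.
  have H0 : \sum_(k | `[< Q2 k >]) (@rK R V A src dst A1 c o d xS k - dotv y (@uK R V A src dst A1 o d xS k)) = 0.
    by rewrite sumrB -dotv_sumr Hs subrr.
  have Hpos : forall j, `[< Q2 j >] -> 0 <= @rK R V A src dst A1 c o d xS j - dotv y (@uK R V A src dst A1 o d xS j).
    by move=> j _; rewrite subr_ge0.
  have := psumr_eq0P Hpos H0 (asboolT Qk).
  by move/subr0_eq/esym.
- move=> [p Hp [q Hq E]]; apply: Hnv; exists p; last exists q => //.
  + by apply: aff_mono Hp => x [].
  + by apply: aff_mono Hq => x [].
- rewrite HT' HT; apply/seteqP; split => t.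
    move=> [[z Fz] Ht]; exists z; split => //=; by rewrite dotv_pair mulr0 addr0.
  move=> [z [Fz Hd]]; split; first by exists z.
  by move: Hd; rewrite /= dotv_pair mulr0 addr0.
Qed.
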